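(* Given a positive integer $k$ and an integer $q$ with $|q|\le 2^k$, there is a connected finite simple graph $G$ with $\phi_3(G)=k$ and $I(G;-1)=q$.
   Context: For a finite simple graph $G$, the independence polynomial is $I(G;x)=\sum_{k\ge 0} i_k(G)x^k$, where $i_k(G)$ is the number of independent sets of $G$ of size $k$ (with $i_0(G)=1$, counting the empty set). A $\tilde{3}$-cycle is a cycle whose length is divisible by $3$. A graph is called ternary if it contains no induced $\tilde{3}$-cycle. A set $D\subseteq V(G)$ is a $\tilde{3}$-decycling set of $G$ if $G-D$ is ternary. The ternary decycling number $\phi_3(G)$ is the minimum size of a $\tilde{3}$-decycling set of $G$. *)

(* Defs.v *)
From mathcomp Require Import all_boot all_order all_algebra.
Set Implicit Arguments. Unset Strict Implicit. Unset Printing Implicit Defensive.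
Import GRing.Theory Num.Theory.

Section Graphs.
Variable T : finType.
Variable e : rel T.

Definition simple_graph : Prop := symmetric e /\ irreflexive e.

Definition connected_graph : bool :=
  (0 < #|T|)%N && [forall x, forall y, connect e x y].

Definition independent (S : {set T}) : bool :=
  [forall x in S, forall y in S, ~~ e x y].

Definition indep_poly : {poly int} :=
  \sum_(S : {set T} | independent S) 'X^#|S|.

(* f enumerates, in cyclic order, the vertices of an induced cycle of length n
   (n >= 3 is imposed where used): f is injective, and f i, f j are adjacent
   exactly when they are consecutive along the cycle. *)
Definition induced_cycle (n : nat) (f : {ffun 'I_n -> T}) : bool :=
  injectiveb f &&
  [forall i : 'I_n, forall j : 'I_n,
     e (f i) (f j) == ((val j == (val i).+1 %% n) || (val i == (val j).+1 %% n))].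

Definition ternary_on (A : {set T}) : bool :=
  ~~ [exists n : 'I_(#|T|).+1,
        [&& (2 < n)%N, (3 %| n)%N &
          [exists f : {ffun 'I_n -> T},
             [forall i, f i \in A] && induced_cycle f]]].

Definition decycling3 (D : {set T}) : bool := ternary_on (~: D).

(* ternary decycling number: minimum size of a 3~-decycling set
   (setT is always one, so the default #|T| is attained) *)
Definition phi3 : nat :=
  \big[minn/#|T|]_(D : {set T} | decycling3 D) #|D|.

End Graphs.

(* Main.v *)
Require Import Defs.
From mathcomp Require Import all_boot all_order all_algebra.
From mathcomp Require Import zify ring lra.
Set Implicit Arguments. Unset Strict Implicit. Unset Printing Implicit Defensive.
Import GRing.Theory Num.Theory.
Local Open Scope ring_scope.

Fixpoint fc (adj : rel nat) (n : nat) (s : seq nat) : int :=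
  match n with 0 => 1 | n'.+1 =>
    match s with [::] => 1 | w :: s' => fc adj n' s' - fc adj n' [seq z <- s' | ~~ adj w z] end end.

Lemma fc_map (r1 r2 : rel nat) g n t : {in t &, forall a b, r1 (g a) (g b) = r2 a b} ->
  fc r1 n (map g t) = fc r2 n t.
Proof.
elim: n t => [|n IH] [|a t] //= H.
have Ht : {in t &, forall a b, r1 (g a) (g b) = r2 a b}.
  by move=> u v ut vt; apply: H; rewrite inE ?ut ?vt orbT.
rewrite filter_map IH //; congr (_ - _); rewrite IH.
  congr (fc _ _ _); apply: eq_in_filter => z zt /=; rewrite H // inE ?zt ?eqxx ?orbT //.
by move=> u v; rewrite !mem_filter => /andP[_ ut] /andP[_ vt]; apply: Ht.
Qed.

Lemma bigmin_le (I : finType) (P : pred I) (G : I -> nat) x i0 : P i0 ->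
  (\big[minn/x]_(i | P i) G i <= G i0)%N.
Proof.
move=> Pi0; have : i0 \in index_enum I by rewrite mem_index_enum.
elim: (index_enum I) => //= a r IH; rewrite big_cons inE.
case/orP => [/eqP <-|/IH h]; first by rewrite Pi0 geq_minl.
by case: (P a) => //; rewrite geq_min h orbT.
Qed.

Section Gen.
Variable T : finType.
Variable e : rel T.
Hypothesis esym : symmetric e.
Hypothesis eirr : irreflexive e.

Definition F (A : {set T}) : int :=
  \sum_(S : {set T} | (S \subset A) && independent e S) (-1) ^+ #|S|.
Definition Nc v := v |: [set u | e v u].

Lemma indep_poly_F : (indep_poly e).[-1] = F setT.
Proof.
rewrite /indep_poly /F horner_sum; apply: eq_big => [S|S _]; first by rewrite subsetT.
by rewrite hornerXn.
Qed.

Lemma F0 : F set0 = 1.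
Proof.
rewrite /F (big_pred1 set0) ?cards0 ?expr0 // => S.
rewrite subset0 andb_idr // => /eqP ->.
by apply/forall_inP => x; rewrite inE.
Qed.

Lemma indepP (S : {set T}) : reflect (forall x y, x \in S -> y \in S -> ~~ e x y) (independent e S).
Proof.
apply: (iffP forall_inP) => H.
  by move=> x y xS yS; exact: (forall_inP (H x xS)).
by move=> x xS; apply/forall_inP => y yS; exact: H.
Qed.

Lemma indepU1 v (S : {set T}) : independent e (v |: S) =
   independent e S && [forall u in S, ~~ e v u].
Proof.
apply/indepP/andP => [H|[/indepP H /forall_inP H2] x y].
  split; first by apply/indepP => x y xS yS; apply: H; rewrite !inE ?xS ?yS orbT.
  by apply/forall_inP => u uS; apply: H; rewrite !inE ?uS ?eqxx ?orbT.
rewrite !inE => /orP[/eqP->|xS] /orP[/eqP->|yS].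
- by rewrite eirr.
- exact: H2.
- by rewrite esym; exact: H2.
- exact: H.
Qed.

Lemma Fdel v (A : {set T}) : v \in A -> F A = F (A :\ v) - F (A :\: Nc v).
Proof.
move=> vA; rewrite /F (bigID (fun S : {set T} => v \in S)) /= addrC; congr (_ + _).
  apply: eq_bigl => S; rewrite andbAC; congr (_ && _).
  apply/idP/idP => [/andP[sA vS]|sA].
    by apply/subsetP => x xS; rewrite !inE (subsetP sA) // andbT; apply: contraNneq vS => <-.
  apply/andP; split.
    by apply/subsetP => x /(subsetP sA); rewrite inE => /andP[].
  by apply/negP => /(subsetP sA); rewrite !inE eqxx.
rewrite (reindex_onto (fun S => v |: S) (fun S => S :\ v)); last first.
  by move=> S /andP[_ vS]; rewrite setD1K.
rewrite -sumrN; apply: eq_big => [S|S /andP[/andP[_ _] /eqP eS]].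
  rewrite setU11 andbT indepU1.
  apply/idP/idP.
    move=> /andP[/andP[sA /andP[iS /forall_inP nE]] /eqP eS].
    have vS : v \notin S by rewrite -eS !inE eqxx.
    rewrite iS andbT; apply/subsetP => x xS; rewrite !inE.
    have -> : (x == v) = false by apply: contraNF vS => /eqP <-.
    by rewrite nE // (subsetP sA) // inE xS orbT.
  move=> /andP[sA iS].
  have vS : v \notin S by apply/negP => /(subsetP sA); rewrite !inE eqxx.
  apply/andP; split; last by rewrite setU1K.
  rewrite iS /=; apply/andP; split.
    apply/subsetP => x; rewrite !inE => /orP[/eqP->//|xS].
    by move: (subsetP sA x xS); rewrite !inE => /andP[].
  apply/forall_inP => u uS; move: (subsetP sA u uS); rewrite !inE.
  by case: (e v u); rewrite ?orbT.
have vS : v \notin S by rewrite -eS !inE eqxx.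
by rewrite cardsU1 vS exprS mulN1r.
Qed.

Lemma Fprod (A B : {set T}) : (forall x, x \in A -> x \notin B) ->
  (forall a b, a \in A -> b \in B -> ~~ e a b) -> F (A :|: B) = F A * F B.
Proof.
elim: {B}#|B|.+1 {-2}B (ltnSn #|B|) => // n IH B; rewrite ltnS => Bn dAB nE.
case: (set_0Vmem B) => [->|[v vB]]; first by rewrite setU0 F0 mulr1.
have vA : v \notin A by apply/negP => /dAB; rewrite vB.
rewrite (Fdel (v:=v)) ?inE ?vB ?orbT // (Fdel vB) mulrBr.
have -> : (A :|: B) :\ v = A :|: (B :\ v).
  apply/setP => x; rewrite !inE; case: (x =P v) => [->|]; first by rewrite (negPf vA).
  by [].
have -> : (A :|: B) :\: Nc v = A :|: (B :\: Nc v).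
  apply/setP => x; rewrite !inE; case xA: (x \in A) => /=; last by [].
  have -> : (x == v) = false by apply/negP => /eqP xv; move: vA; rewrite -xv xA.
  by rewrite esym (negPf (nE _ _ xA vB)).
have cD1 : (#|B :\ v| < n)%N by rewrite (cardsD1 v B) vB in Bn.
have cD2 : (#|B :\: Nc v| < n)%N.
  apply: leq_trans Bn; apply: proper_card; apply/properP; split.
    by apply/subsetP => x; rewrite inE => /andP[].
  by exists v; rewrite // !inE eqxx.
have d1 : forall x, x \in A -> x \notin B :\ v.
  by move=> x /dAB; rewrite inE; apply: contra => /andP[].
have d2 : forall x, x \in A -> x \notin B :\: Nc v.
  by move=> x /dAB; rewrite inE; apply: contra => /andP[].
have n1 : forall a b, a \in A -> b \in B :\ v -> ~~ e a b.
  by move=> a b aA; rewrite inE => /andP[_ bB]; apply: nE.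
have n2 : forall a b, a \in A -> b \in B :\: Nc v -> ~~ e a b.
  by move=> a b aA; rewrite inE => /andP[_ bB]; apply: nE.
by rewrite (IH (B :\ v)) // (IH (B :\: Nc v)).
Qed.

Lemma Fglue (A H : {set T}) x y : (forall u, u \in A -> u \notin H) ->
  x \in A -> y \in H -> e x y ->
  (forall a b, a \in A -> b \in H -> e a b -> (a == x) && (b == y)) ->
  F (A :|: H) = F A * F (H :\ y) - F (A :\ x) * F (H :\: Nc y).
Proof.
move=> dAH xA yH exy cr.
have yA : y \notin A by apply/negP => /dAH; rewrite yH.
rewrite (Fdel (v:=y)) ?inE ?yH ?orbT //.
have -> : (A :|: H) :\ y = A :|: (H :\ y).
  apply/setP => u; rewrite !inE; case: (u =P y) => [->|]; first by rewrite (negPf yA).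
  by [].
have -> : (A :|: H) :\: Nc y = (A :\ x) :|: (H :\: Nc y).
  apply/setP => u; rewrite !inE; case uA: (u \in A) => /=.
    have -> : (u == y) = false by apply/negP => /eqP uy; move: yA; rewrite -uy uA.
    have uH : (u \in H) = false by apply/negbTE/dAH.
    rewrite uH /= !andbT !andbF !orbF.
    case: (u =P x) => [->|nux] /=; first by rewrite esym exy.
    rewrite esym; case euy: (e u y) => //.
    by move: (cr _ _ uA yH euy) => /andP[/eqP].
  by rewrite andbF.
have d1 : forall u, u \in A -> u \notin H :\ y.
  by move=> u /dAH; apply: contra; rewrite inE => /andP[].
have d2 : forall u, u \in A :\ x -> u \notin H :\: Nc y.
  by move=> u; rewrite inE => /andP[_ /dAH]; apply: contra; rewrite inE => /andP[].
have n1 : forall a b, a \in A -> b \in H :\ y -> ~~ e a b.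
  move=> a b aA; rewrite inE => /andP[nby bH]; apply/negP => /(cr _ _ aA bH) /andP[_ /eqP by'].
  by rewrite by' inE eqxx in nby.
have n2 : forall a b, a \in A :\ x -> b \in H :\: Nc y -> ~~ e a b.
  move=> a b; rewrite !inE => /andP[nax aA] /andP[_ bH]; apply/negP => /(cr _ _ aA bH) /andP[/eqP ax].
  by rewrite ax eqxx in nax.
by rewrite (Fprod d1 n1) (Fprod d2 n2).
Qed.

Section ListF.
Variable phi : T -> nat.
Variable psi : nat -> T.
Hypothesis phi_inj : injective phi.
Variable adj : rel nat.
Hypothesis e_adj : forall u v, e u v = adj (phi u) (phi v).


Lemma F_list n s (A : {set T}) : (size s <= n)%N -> uniq s -> (forall w, w \in s -> phi (psi w) = w) ->
  (forall u, (u \in A) = (phi u \in s)) -> F A = fc adj n s.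
Proof.
elim: n s A => [|n IH] [|w s] A //= sn us ps mA.
- have -> : A = set0 by apply/setP => u; rewrite mA inE.
  by rewrite F0.
- have -> : A = set0 by apply/setP => u; rewrite mA inE.
  by rewrite F0.
move: us => /andP[ws us].
have pw : phi (psi w) = w by rewrite ps // inE eqxx.
have vA : psi w \in A by rewrite mA pw inE eqxx.
rewrite (Fdel vA); congr (_ - _); apply: IH => //.
- by move=> z zs; apply: ps; rewrite inE zs orbT.
- move=> u; rewrite !inE mA inE; case: (u =P psi w) => [->|nu]; first by rewrite pw eqxx (negPf ws).
  have -> : (phi u == w) = false by apply/negP => /eqP pu; apply: nu; apply: phi_inj; rewrite pw.
  by [].
- by rewrite size_filter (leq_trans (count_size _ _)).
- by apply: filter_uniq.
- by move=> z; rewrite mem_filter => /andP[_ zs]; apply: ps; rewrite inE zs orbT.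
- move=> u; rewrite !inE mA inE mem_filter e_adj pw.
  case: (u =P psi w) => [->|nu]; first by rewrite pw eqxx (negPf ws) andbF.
  have -> : (phi u == w) = false by apply/negP => /eqP pu; apply: nu; apply: phi_inj; rewrite pw.
  by rewrite /= andbC.
Qed.
End ListF.

Lemma ordSS_neq N (i : 'I_N) : (2 < N)%N -> ordS (ordS i) != i.
Proof.
move=> N2; apply/negP => /eqP /(congr1 val) /=.
have iN := ltn_ord i.
case: (ltngtP i.+1 N) => h.
- rewrite (modn_small h); case: (ltngtP i.+2 N) => h2.
  + by rewrite (modn_small h2) => /eqP; rewrite -addn2 -{2}(addn0 i) eqn_add2l.
  + by move: h2; rewrite ltnNge h.
  + by rewrite h2 modnn => i0; move: h2; rewrite -i0 => h2; rewrite -h2 in N2.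
- by move: h; rewrite ltnNge iN.
- rewrite h modnn modn_small; last by apply: ltn_trans N2.
  by move=> i1; move: h; rewrite -i1 => h; rewrite -h in N2.
Qed.

Lemma ternary_rank (A : {set T}) (rk : T -> nat) : {in A &, injective rk} ->
  (forall v u1 u2, v \in A -> u1 \in A -> u2 \in A -> e v u1 -> e v u2 ->
      (rk u1 < rk v)%N -> (rk u2 < rk v)%N -> u1 = u2) -> ternary_on e A.
Proof.
move=> rinj H; apply/negP => /existsP [n /and3P [n2 _ /existsP [f /andP [/forallP fA /andP[finj /forallP fcyc]]]]].
have n0 : (0 < n)%N by apply: ltn_trans n2.
case: (@arg_maxnP _ (Ordinal n0) predT (fun i => rk (f i)) isT) => i _ imax.
set jp := ordS i; set jm := ord_pred i.
have ep : e (f i) (f jp).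
  by move: (forallP (fcyc i) jp) => /eqP ->; rewrite /= eqxx.
have em : e (f i) (f jm).
  move: (forallP (fcyc i) jm) => /eqP ->; apply/orP; right.
  by rewrite -[in X in X == _](ord_predK i).
have lt j : e (f i) (f j) -> (rk (f j) < rk (f i))%N.
  move=> eij; rewrite ltn_neqAle; have -> : (rk (f j) <= rk (f i))%N := imax j isT; rewrite andbT; apply/negP => /eqP /rinj.
  move=> /(_ (fA j) (fA i)) fji; by rewrite fji eirr in eij.
have := H _ _ _ (fA i) (fA jp) (fA jm) ep em (lt _ ep) (lt _ em).
move/injectiveP: finj => finj /finj /(congr1 (@ordS _)).
rewrite /jm ord_predK; apply/eqP; exact: ordSS_neq.
Qed.

Lemma triangle_not_ternary (A : {set T}) a b c : a \in A -> b \in A -> c \in A ->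
  e a b -> e b c -> e a c -> (3 <= #|T|)%N -> ~~ ternary_on e A.
Proof.
move=> aA bA cA eab ebc eac T3; rewrite /ternary_on negbK.
have h3 : (3 < #|T|.+1)%N by [].
apply/existsP; exists (Ordinal h3); rewrite /=.
apply/existsP; exists [ffun i : 'I_3 => nth a [:: a; b; c] i].
have nab : a != b by apply: contraTneq eab => ->; rewrite eirr.
have nbc : b != c by apply: contraTneq ebc => ->; rewrite eirr.
have nac : a != c by apply: contraTneq eac => ->; rewrite eirr.
apply/andP; split.
  by apply/forallP => i; rewrite ffunE; case: i => [[|[|[|]]] ?].
apply/andP; split.
  apply/injectiveP => i j; rewrite !ffunE.
  case: i => [[|[|[|]]] ?] //; case: j => [[|[|[|]]] ?] //= h; apply: val_inj => //=;
  by move: nab nbc nac; rewrite h eqxx.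
apply/forallP => i; apply/forallP => j; rewrite !ffunE.
case: i => [[|[|[|]]] ?] //; case: j => [[|[|[|]]] ?] //=;
  by rewrite ?eirr ?eab ?ebc ?eac // esym ?eab ?ebc ?eac.
Qed.

Lemma phi3_eq (D0 : {set T}) k : decycling3 e D0 -> #|D0| = k ->
  (forall D, decycling3 e D -> (k <= #|D|)%N) -> phi3 e = k.
Proof.
move=> dD0 cD0 lb; apply/eqP; rewrite eqn_leq; apply/andP; split.
  by rewrite -cD0 /phi3; apply: bigmin_le.
rewrite /phi3; elim/big_ind: _ => [|a b ha hb|D /lb //].
- by rewrite -cD0 max_card.
- by rewrite leq_min ha hb.
Qed.
End Gen.

Local Close Scope ring_scope.

Fixpoint Qf (q0 r : int) (bb : nat -> bool) (j : nat) : int :=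
  match j with 0 => q0 | j'.+1 => 2 * Qf q0 r bb j' - (bb j')%:Z * r end.

Definition padj (a b : nat) : bool := (a.+1 == b) || (b.+1 == a).

Section Concrete.
Variables (m' K : nat) (bb : nat -> bool).
Hypothesis K0 : (0 < K)%N.

Local Notation m := (m'.+1).
Local Notation L := (m'.+1 + 6 * K).
Local Notation n0 := (m' + 7 * K).
Local Notation V := ('I_n0.+1).

Definition hub (u w : nat) : bool := (u < L) && (L <= w) &&
  (((m + 6 * (w - L)).+1 <= u <= m + 6 * (w - L) + 3) || (~~ bb (w - L) && (u == m + 6 * (w - L)))).
Definition adj (u v : nat) : bool :=
  ((u < L) && (v < L) && ((u.+1 == v) || (v.+1 == u))) || hub u v || hub v u.
Definition eV : rel V := fun u v => adj u v.

Lemma eV_sym : symmetric eV.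
Proof. move=> u v; rewrite /eV /adj; case: (hub u v); case: (hub v u); rewrite ?orbT ?orbF //=. 
by rewrite [(_ < L) && _]andbC orbC. Qed.

Lemma eV_irr : irreflexive eV.
Proof. move=> u; rewrite /eV /adj /hub; apply/negP; lia. Qed.

Definition gv j a := if a < 6 then m + 6 * j + a else L + j.
Definition gh (b : bool) a c := (a < 6) && (c == 6) && ((1 <= a <= 3) || (~~ b && (a == 0))).
Definition gadj (b : bool) a c :=
  ((a < 6) && (c < 6) && ((a.+1 == c) || (c.+1 == a))) || gh b a c || gh b c a.

Lemma gv_le j a : j < K -> a < 7 -> gv j a <= n0.
Proof. rewrite /gv => jK a7; case: ifP => _; lia. Qed.

Lemma adj_g j a c : j < K -> a < 7 -> c < 7 -> adj (gv j a) (gv j c) = gadj (bb j) a c.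
Proof.
move=> jK a7 c7; rewrite /adj /hub /gadj /gh /gv.
case: ifP => a6; case: ifP => c6; rewrite ?addKn; case: (bb j); apply/idP/idP; lia.
Qed.


Definition Hs j (t : seq nat) : {set V} := [set u : V | nat_of_ord u \in map (gv j) t].

Lemma gv_inj j a c : j < K -> a < 7 -> c < 7 -> gv j a = gv j c -> a = c.
Proof. rewrite /gv => jK a7 c7; case: ifP => h1; case: ifP => h2; lia. Qed.

Lemma F_Hs j t : j < K -> uniq t -> all (fun a => a < 7) t ->
  F eV (Hs j t) = fc (gadj (bb j)) (size t) t.
Proof.
move=> jK ut /allP t7.
rewrite -(@fc_map adj _ (gv j)); last by move=> a c /t7 a7 /t7 c7; apply: adj_g.
apply: (@F_list _ eV eV_sym eV_irr (@nat_of_ord _) (fun w => inord w)) => //.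
- exact: val_inj.
- by rewrite size_map.
- rewrite map_inj_in_uniq // => a c /t7 a7 /t7 c7; exact: (gv_inj jK).
- by move=> w /mapP[a /t7 a7 ->] /=; rewrite inordK // ltnS gv_le.
- by move=> u; rewrite inE.
Qed.

Lemma inord_gv j a : j < K -> a < 7 -> nat_of_ord (inord (gv j a) : V) = gv j a.
Proof. by move=> jK a7; rewrite inordK // ltnS gv_le. Qed.

Lemma Hs_sub j t (Q : pred V) (p : pred nat) : j < K -> all (fun a => a < 7) t ->
  (forall a, a < 7 -> Q (inord (gv j a)) = p a) ->
  [set u in Hs j t | Q u] = Hs j [seq a <- t | p a].
Proof.
move=> jK /allP t7 QP; apply/setP => u; rewrite !inE; apply/andP/mapP.
  move=> [/mapP[a aT ua] Qu]; exists a => //; rewrite mem_filter aT andbT -QP ?t7 //.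
  by have -> : inord (gv j a) = u by apply: val_inj => /=; rewrite inord_gv ?t7.
move=> [a]; rewrite mem_filter => /andP[pa aT] ua; split; first by apply/mapP; exists a.
have -> : u = inord (gv j a) by apply: val_inj => /=; rewrite inord_gv ?t7.
by rewrite QP ?t7.
Qed.

Definition yv j : V := inord (gv j 0).
Definition xpv j : V := inord (gv j 5).

Lemma Hs_D1 j t c : j < K -> c < 7 -> all (fun a => a < 7) t ->
  Hs j t :\ inord (gv j c) = Hs j [seq a <- t | a != c].
Proof.
move=> jK c7 t7; rewrite -(Hs_sub (Q := fun u => u != inord (gv j c))) //.
  by apply/setP => u; rewrite !inE andbC.
move=> a a7 /=; apply/idP/idP; apply: contra.
  by move/eqP ->.
by move/eqP/(congr1 (@nat_of_ord _)); rewrite !inord_gv // => /(gv_inj jK) ->.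
Qed.

Lemma Hs_DN j t : j < K -> all (fun a => a < 7) t ->
  Hs j t :\: Nc eV (yv j) = Hs j [seq a <- t | (a != 0) && ~~ gadj (bb j) 0 a].
Proof.
move=> jK t7; rewrite -(Hs_sub (Q := fun u => u \notin Nc eV (yv j))) //.
  by apply/setP => u; rewrite !inE andbC.
move=> a a7 /=; rewrite /Nc !inE /eV /yv !inord_gv // adj_g //.
have -> : (inord (gv j a) == inord (gv j 0) :> V) = (a == 0).
  apply/idP/idP; last by move/eqP ->.
  by move/eqP/(congr1 (@nat_of_ord _)); rewrite !inord_gv // => /(gv_inj jK) ->.
by rewrite negb_or.
Qed.


Local Open Scope ring_scope.

Lemma gadget_vals j : (j < K)%N ->
  [/\ F eV (Hs j (iota 0 7) :\ yv j) = 2,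
      F eV (Hs j (iota 0 7) :\: Nc eV (yv j)) = (bb j)%:Z,
      F eV ((Hs j (iota 0 7) :\ xpv j) :\ yv j) = 0 &
      F eV ((Hs j (iota 0 7) :\ xpv j) :\: Nc eV (yv j)) = -1].
Proof.
move=> jK; rewrite /yv /xpv.
have a7 : all (fun a => a < 7)%N (iota 0 7) by [].
have a7' : all (fun a => a < 7)%N [seq a <- iota 0 7 | a != 5%N] by [].
rewrite (Hs_D1 _ _ a7) // (Hs_DN _ a7) // (Hs_D1 _ _ a7) // (Hs_D1 _ _ a7') // (Hs_DN _ a7') //.
rewrite !F_Hs //; try by case: (bb j).
Qed.


Definition U j : {set V} := [set u : V | (nat_of_ord u < m + 6 * j)%N || (L <= nat_of_ord u < L + j)%N].
Definition xv j : V := inord (m' + 6 * j).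

Lemma val_xv j : (j <= K)%N -> nat_of_ord (xv j) = (m' + 6 * j)%N.
Proof. by move=> jK; rewrite inordK //; lia. Qed.

Lemma val_yv j : (j < K)%N -> nat_of_ord (yv j) = (m + 6 * j)%N.
Proof. by move=> jK; rewrite /yv inord_gv // /gv /= addn0. Qed.

Lemma xv_xpv j : (j < K)%N -> xv j.+1 = xpv j.
Proof. by move=> jK; apply: val_inj => /=; rewrite val_xv // /xpv inord_gv // /gv /=; lia. Qed.

Lemma in_Hs j t u : (j < K)%N -> all (fun a => a < 7)%N t -> u \in Hs j t ->
  exists2 a, (a < 7)%N & nat_of_ord u = gv j a.
Proof. by move=> jK /allP t7; rewrite inE => /mapP[a /t7 a7 ->]; exists a. Qed.

Lemma U_step j : (j < K)%N -> U j.+1 = U j :|: Hs j (iota 0 7).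
Proof.
move=> jK; apply/setP => u; rewrite !inE /gv /=; have := ltn_ord u.
by move=> uM; apply/idP/idP; lia.
Qed.

Lemma U_step' j : (j < K)%N -> U j.+1 :\ xv j.+1 = U j :|: (Hs j (iota 0 7) :\ xv j.+1).
Proof.
move=> jK; apply/setP => u; rewrite !inE /gv /= -val_eqE /= val_xv //; have := ltn_ord u.
by move=> uM; apply/idP/idP; lia.
Qed.

Lemma U_disj j t u : (j < K)%N -> all (fun a => a < 7)%N t -> u \in U j -> u \notin Hs j t.
Proof.
move=> jK t7; rewrite inE => uU; apply/negP => /(in_Hs jK t7) [a a7 ua].
by move: uU; rewrite ua /gv; case: ifP => ?; lia.
Qed.

Lemma U_cross j t a b : (j < K)%N -> all (fun a => a < 7)%N t -> a \in U j -> b \in Hs j t ->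
  eV a b -> (a == xv j) && (b == yv j).
Proof.
move=> jK t7; rewrite inE => aU /(in_Hs jK t7) [c c7 bc] eab.
have H : (nat_of_ord a == m' + 6*j)%N && (nat_of_ord b == m + 6*j)%N.
  by move: eab; rewrite /eV /adj /hub bc /gv; case: ifP => ?; lia.
case/andP: H => /eqP ha /eqP hb; apply/andP; split; apply/eqP/val_inj => /=.
  by rewrite val_xv ?(ltnW jK).
by rewrite val_yv.
Qed.

Lemma xv_U j : (j <= K)%N -> xv j \in U j.
Proof. by move=> jK; rewrite inE val_xv //; lia. Qed.

Lemma yv_H j : (j < K)%N -> yv j \in Hs j (iota 0 7) :\ xv j.+1.
Proof.
move=> jK; rewrite !inE -val_eqE /= val_xv // val_yv // /gv /=; lia.
Qed.

Lemma e_xy j : (j <= K)%N -> (j < K)%N -> eV (xv j) (yv j).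
Proof. by move=> _ jK; rewrite /eV val_xv 1?ltnW // val_yv // /adj; lia. Qed.


Lemma step j : (j < K)%N ->
  F eV (U j.+1) = 2 * F eV (U j) - (bb j)%:Z * F eV (U j :\ xv j) /\
  F eV (U j.+1 :\ xv j.+1) = F eV (U j :\ xv j).
Proof.
move=> jK; have t7 : all (fun a => a < 7)%N (iota 0 7) by [].
have [g1 g2 g3 g4] := gadget_vals jK.
have yH : yv j \in Hs j (iota 0 7) by move: (yv_H jK); rewrite inE => /andP[].
split.
  rewrite U_step // (Fglue eV_sym eV_irr (x:=xv j) (y:=yv j)) //.
  - by rewrite g1 g2; ring.
  - by move=> u uU; apply: U_disj uU.
  - by apply: xv_U; apply: ltnW.
  - by apply: e_xy => //; apply: ltnW.
  - by move=> a b aU bH; apply: U_cross bH.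
rewrite U_step' // (Fglue eV_sym eV_irr (x:=xv j) (y:=yv j)) //.
- by rewrite xv_xpv // g3 g4 mulr0 sub0r mulrN1 opprK.
- by move=> u uU; rewrite inE negb_and (U_disj jK t7 uU) orbT.
- by apply: xv_U; apply: ltnW.
- by apply: yv_H.
- by apply: e_xy => //; apply: ltnW.
- by move=> a b aU; rewrite inE => /andP[_ bH]; apply: U_cross bH.
Qed.

Lemma U0_list : F eV (U 0) = fc padj m (iota 0 m) /\ F eV (U 0 :\ xv 0) = fc padj m' (iota 0 m').
Proof.
have hadj n : (n <= m)%N -> fc adj n (iota 0 n) = fc padj n (iota 0 n).
  move=> nm; rewrite -{1}(map_id (iota 0 n)); apply: fc_map => a b; rewrite !mem_iota /adj /hub /padj.
  move=> ha hb; apply/idP/idP; lia.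
split.
  rewrite -hadj //; apply: (@F_list _ eV eV_sym eV_irr (@nat_of_ord _) (fun w => inord w)) => //.
  - exact: val_inj.
  - by rewrite size_iota.
  - exact: iota_uniq.
  - by move=> w; rewrite mem_iota => hw /=; rewrite inordK //; lia.
  - by move=> u; rewrite !inE mem_iota; apply/idP/idP; lia.
rewrite -hadj //; apply: (@F_list _ eV eV_sym eV_irr (@nat_of_ord _) (fun w => inord w)) => //.
- exact: val_inj.
- by rewrite size_iota.
- exact: iota_uniq.
- by move=> w; rewrite mem_iota => hw /=; rewrite inordK //; lia.
- by move=> u; rewrite !inE -val_eqE /= val_xv // mem_iota; apply/idP/idP; lia.
Qed.

Lemma F_all : F eV setT = Qf (fc padj m (iota 0 m)) (fc padj m' (iota 0 m')) bb K.
Proof.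
have [h0 h1] := U0_list.
suff H : forall j, (j <= K)%N -> F eV (U j) = Qf (fc padj m (iota 0 m)) (fc padj m' (iota 0 m')) bb j /\
   F eV (U j :\ xv j) = fc padj m' (iota 0 m').
  have -> : setT = U K by apply/setP => u; rewrite !inE; have := ltn_ord u; lia.
  by case: (H K (leqnn K)).
elim=> [|j IH] jK; first by split.
have [IH1 IH2] := IH (ltnW jK).
have [s1 s2] := step jK.
by rewrite s1 s2 IH1 IH2.
Qed.


Lemma conn_path i : (i < L)%N -> connect eV ord0 (inord i : V).
Proof.
elim: i => [|i IH] iL.
  by have -> : (inord 0 : V) = ord0 by apply: ord_inj; rewrite /= inordK.
apply: connect_trans (IH (ltnW iL)) _; apply: connect1.
by rewrite /eV !inordK /adj; lia.
Qed.

Lemma conn0 (u : V) : connect eV ord0 u.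
Proof.
have uM := ltn_ord u.
case: (ltnP u L) => uL.
  by have := conn_path uL; rewrite inord_val.
have hL : ((m + 6 * (u - L)).+1 < L)%N by lia.
apply: connect_trans (conn_path hL) _; apply: connect1.
by rewrite /eV inordK /adj /hub; lia.
Qed.

Lemma connV : connected_graph eV.
Proof.
apply/andP; split; first by rewrite card_ord.
apply/forallP => x; apply/forallP => y.
apply: connect_trans (conn0 y); rewrite (sym_connect_sym eV_sym); exact: conn0.
Qed.

Definition D0 : {set V} := [set u : V | (L <= nat_of_ord u)%N].

Lemma D0_dec : decycling3 eV D0.
Proof.
rewrite /decycling3; apply: (@ternary_rank _ eV eV_irr _ (@nat_of_ord _)).
  by move=> a b _ _; apply: ord_inj.
move=> v u1 u2; rewrite !inE /eV /adj /hub => hv h1 h2 e1 e2 l1 l2.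
by apply: ord_inj; lia.
Qed.

Definition hubv (j : 'I_K) : V := inord (L + j).

Lemma D0_card : #|D0| = K.
Proof.
have hinj : injective hubv.
  move=> i j; have hi := ltn_ord i; have hj := ltn_ord j; move=> /(congr1 (@nat_of_ord _)); rewrite /hubv !inordK; try lia; by move=> h; apply: ord_inj; lia.
have -> : D0 = hubv @: setT.
  apply/setP => u; rewrite inE; apply/idP/imsetP.
    move=> hu; have hj : (u - L < K)%N by have := ltn_ord u; lia.
    by exists (Ordinal hj) => //; apply: ord_inj; rewrite /hubv /= inordK; lia.
  by move=> [j _ ->]; have hj := ltn_ord j; rewrite /hubv inordK; lia.
by rewrite card_imset // cardsT card_ord.
Qed.

Definition tri_mem (j : nat) (u : V) : bool :=
  (nat_of_ord u == m + 6 * j + 1)%N || (nat_of_ord u == m + 6 * j + 2)%N || (nat_of_ord u == L + j)%N.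

Lemma D_lower (D : {set V}) : decycling3 eV D -> (K <= #|D|)%N.
Proof.
move=> dD.
pose pj (j : 'I_K) := odflt ord0 [pick u | (u \in D) && tri_mem j u].
have pjP (j : 'I_K) : (pj j \in D) && tri_mem j (pj j).
  rewrite /pj; case: pickP => [u //|none].
  have ht (a : nat) : (a <= n0)%N -> (inord a : V) \notin ~: D -> (inord a : V) \in D.
    by move=> _; rewrite inE negbK.
  have hj := ltn_ord j.
  have bad : ~~ ternary_on eV (~: D).
    apply: (@triangle_not_ternary _ eV eV_sym eV_irr _ (inord (m + 6 * j + 1)) (inord (m + 6 * j + 2)) (inord (L + j))).
    - rewrite inE; apply/negP => hD; move: (none (inord (m + 6 * j + 1))).
      by rewrite hD /tri_mem inordK /=; [rewrite eqxx|lia].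
    - rewrite inE; apply/negP => hD; move: (none (inord (m + 6 * j + 2))).
      by rewrite hD /tri_mem inordK /=; [rewrite eqxx orbT|lia].
    - rewrite inE; apply/negP => hD; move: (none (inord (L + j))).
      by rewrite hD /tri_mem inordK /=; [rewrite eqxx !orbT|lia].
    - by rewrite /eV !inordK /adj; lia.
    - by rewrite /eV !inordK /adj /hub ?addKn; lia.
    - by rewrite /eV !inordK /adj /hub ?addKn; lia.
    - by rewrite card_ord; lia.
  by move: dD; rewrite /decycling3 (negbTE bad).
have pinj : injective pj.
  move=> i j hij; move: (pjP i) (pjP j); rewrite hij /tri_mem => /andP[_ hi] /andP[_ hj].
  by apply: ord_inj; move: (ltn_ord i) (ltn_ord j); lia.
rewrite -{1}(card_ord K) -cardsT -(card_imset _ pinj).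
apply: subset_leq_card; apply/subsetP => u /imsetP[j _ ->].
by case/andP: (pjP j).
Qed.

Lemma phi3V : phi3 eV = K.
Proof. exact: (phi3_eq D0_dec D0_card D_lower). Qed.

End Concrete.

Local Open Scope ring_scope.

Lemma Qf_ext q0 r (b1 b2 : nat -> bool) k : (forall j, (j < k)%N -> b1 j = b2 j) ->
  Qf q0 r b1 k = Qf q0 r b2 k.
Proof.
elim: k => [|k IH] //= H; rewrite IH ?H //.
by move=> j jk; apply: H; apply: ltnW.
Qed.

Lemma Qf_exists q0 r k s : (s < 2 ^ k)%N ->
  exists bb, Qf q0 r bb k = (2 ^ k)%N%:Z * q0 - r * s%:Z.
Proof.
elim: k s => [|k IH] s hs.
  by exists (fun _ => false); move: hs; rewrite expn0 ltnS leqn0 => /eqP -> /=; rewrite mul1r mulr0 subr0.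
have hs2 : (s./2 < 2 ^ k)%N.
  by move: hs; rewrite expnS -(odd_double_half s) -muln2; case: (odd s) => /=; lia.
have [bb' hb'] := IH _ hs2.
exists (fun j => if j == k then odd s else bb' j).
rewrite /= (@Qf_ext q0 r _ bb'); last by move=> j jk; rewrite (ltn_eqF jk).
rewrite hb' eqxx.
have hs' : (s%:Z) = (odd s)%:Z + (s./2)%:Z * 2 by rewrite -PoszM -PoszD muln2 odd_double_half.
rewrite hs' expnS PoszM.
ring.
Qed.

Lemma build m' k bb : (0 < k)%N -> exists (T : finType) (e : rel T),
  [/\ simple_graph e, connected_graph e, phi3 e = k &
      (indep_poly e).[-1] = Qf (fc padj m'.+1 (iota 0 m'.+1)) (fc padj m' (iota 0 m')) bb k].
Proof.
move=> k0; exists _, (eV (m':=m') (K:=k) bb); split.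
- by split; [exact: eV_sym|exact: eV_irr].
- exact: connV.
- exact: phi3V.
- by rewrite indep_poly_F F_all.
Qed.

Lemma Qf_zero r k : Qf 0 r (fun _ => false) k = 0.
Proof. by elim: k => //= k ->; rewrite mulr0 mul0r subr0. Qed.

Theorem corollary2p2 (k : nat) (q : int) :
  (0 < k)%N -> (`|q|%N <= 2 ^ k)%N ->
  exists (T : finType) (e : rel T),
    [/\ simple_graph e, connected_graph e, phi3 e = k &
        (indep_poly e).[-1] = q].
Proof.
move=> k0; case: q => n /= hq.
  case: n hq => [|n] hq.
    have [T [e [h1 h2 h3 h4]]] := build 0 (fun _ => false) k0.
    by exists T, e; split => //; rewrite h4 Qf_zero.
  have hs : (2 ^ k - n.+1 < 2 ^ k)%N by lia.
  have [bb hb] := Qf_exists 1 1 hs.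
  have [T [e [h1 h2 h3 h4]]] := build 5 bb k0.
  exists T, e; split => //; rewrite h4.
  have -> : fc padj 6 (iota 0 6) = 1 by [].
  have -> : fc padj 5 (iota 0 5) = 1 by [].
  rewrite hb; lia.
have hs : (2 ^ k - n.+1 < 2 ^ k)%N by lia.
have [bb hb] := Qf_exists (-1) (-1) hs.
have [T [e [h1 h2 h3 h4]]] := build 2 bb k0.
exists T, e; split => //; rewrite h4.
have -> : fc padj 3 (iota 0 3) = -1 by [].
have -> : fc padj 2 (iota 0 2) = -1 by [].
rewrite hb NegzE; lia.
Qed.
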